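(* Under the hypotheses of Lemma 1 (finite multi-set $\mathcal X=\{X_1,\dots,X_n\}$ of real symmetric $2\times2$ matrices, $\lambda_1$ the unique largest eigenvalue of $\mathcal X$, belonging to $X_1$, with $u_1=e_1$, $v_1=e_2$), the largest eigenvalue of $\frac1m\log E_m$, where $E_m=\sum_{i=1}^n\exp(mX_i)$, converges to $\lambda_1$ as $m\to\infty$. Consequently $e_1$ is an eigenvector of $S=\lim_{m\to\infty}\frac1m\log E_m$ with eigenvalue $\lambda_1$.
   Context: $\exp$ and $\log$ denote the matrix exponential and the matrix logarithm of a symmetric positive definite matrix. Every real symmetric $2\times2$ matrix $X_i$ is written in spectral form $X_i=\lambda_i u_iu_i^{\mathsf T}+\mu_i v_iv_i^{\mathsf T}$ with $\lambda_i\ge\mu_i$, $u_i=(\cos\varphi_i,\sin\varphi_i)^{\mathsf T}$, $v_i=(-\sin\varphi_i,\cos\varphi_i)^{\mathsf T}$, $\varphi_i\in[-\pi/2,\pi/2]$. ''The eigenvalues of $\mathcal X$'' means the multi-set of all $2n$ numbers $\lambda_1,\mu_1,\dots,\lambda_n,\mu_n$; an eigenvalue is unique if it occurs exactly once in this multi-set. $e_1=(1,0)^{\mathsf T}$, $e_2=(0,1)^{\mathsf T}$. *)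

(* Defs.v *)
From HB Require Import structures.
From mathcomp Require Import all_boot all_order all_algebra.
From mathcomp Require Import all_classical all_reals all_analysis.
Set Implicit Arguments. Unset Strict Implicit. Unset Printing Implicit Defensive.
Import Order.TTheory GRing.Theory Num.Theory numFieldNormedType.Exports.
Local Open Scope ring_scope.
Local Open Scope classical_set_scope.

Section Defs.
Variable R : realType.

Definition expm (A : 'M[R]_2) : 'M[R]_2 :=
  \matrix_(i, j) limn (fun N : nat => (\sum_(k < N) (k`!%:R)^-1 *: A ^+ k) i j).

Definition logm (E : 'M[R]_2) : 'M[R]_2 :=
  xget 0 [set L : 'M[R]_2 | L^T = L /\ expm L = E].

Definition lmax (A : 'M[R]_2) : R := sup [set a : R | eigenvalue A a].

Definition e1 : 'cV[R]_2 := \col_i (i == 0 :> 'I_2)%:R.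
Definition e2 : 'cV[R]_2 := \col_i (i == 1 :> 'I_2)%:R.

Definition uvec (phi : R) : 'cV[R]_2 := \col_i (if i == 0 :> 'I_2 then cos phi else sin phi).
Definition vvec (phi : R) : 'cV[R]_2 := \col_i (if i == 0 :> 'I_2 then - sin phi else cos phi).

Definition spec2 (lam mu phi : R) : 'M[R]_2 :=
  lam *: (uvec phi *m (uvec phi)^T) + mu *: (vvec phi *m (vvec phi)^T).

Definition Em (n : nat) (X : 'I_n -> 'M[R]_2) (m : nat) : 'M[R]_2 :=
  \sum_(i < n) expm (m%:R *: X i).

End Defs.

(* Main.v *)
Require Import Defs.
From HB Require Import structures.
From mathcomp Require Import all_boot all_order all_algebra.
From mathcomp Require Import all_classical all_reals all_analysis.
From mathcomp Require Import ring lra.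
Import Order.TTheory GRing.Theory Num.Theory numFieldNormedType.Exports.
Local Open Scope ring_scope.

Section Alg.
Context {R : realType}.

Lemma ord2P (i : 'I_2) : i = 0 \/ i = 1.
Proof. case: i => [[|[|k]] Hk]; [left|right|by []]; exact: val_inj. Qed.

Lemma mul2E m n (A : 'M[R]_(m, 2)) (B : 'M[R]_(2, n)) i j : (A *m B) i j = A i 0 * B 0 j + A i 1 * B 1 j.
Proof.
rewrite mxE big_ord_recl big_ord1.
have -> : lift ord0 (@ord0 0) = 1 by exact: val_inj.
by [].
Qed.

Definition ci (c s : R) (i : 'I_2) := if i == 0 then c else s.
Definition Pm (c s : R) : 'M[R]_2 := \matrix_(i, j) (ci c s i * ci c s j).
Definition Qm (c s : R) : 'M[R]_2 := \matrix_(i, j) (ci (- s) c i * ci (- s) c j).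
Definition SF (a b c s : R) : 'M[R]_2 := a *: Pm c s + b *: Qm c s.

Lemma ci0 c s : ci c s 0 = c. Proof. by []. Qed.
Lemma ci1 c s : ci c s 1 = s. Proof. by []. Qed.

Lemma SFE a b c s i j : SF a b c s i j = a * (ci c s i * ci c s j) + b * (ci (- s) c i * ci (- s) c j).
Proof. by rewrite !mxE. Qed.

Lemma SF00 a b c s : SF a b c s 0 0 = a * c^+2 + b * s^+2.
Proof. rewrite SFE /ci /=; ring. Qed.
Lemma SF01 a b c s : SF a b c s 0 1 = (a - b) * (c * s).
Proof. rewrite SFE /ci /=; ring. Qed.
Lemma SF10 a b c s : SF a b c s 1 0 = (a - b) * (c * s).
Proof. rewrite SFE /ci /=; ring. Qed.
Lemma SF11 a b c s : SF a b c s 1 1 = a * s^+2 + b * c^+2.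
Proof. rewrite SFE /ci /=; ring. Qed.

Lemma mx2P (A B : 'M[R]_2) : A 0 0 = B 0 0 -> A 0 1 = B 0 1 -> A 1 0 = B 1 0 ->
  A 1 1 = B 1 1 -> A = B.
Proof.
move=> h1 h2 h3 h4; apply/matrixP => i j.
by case: (ord2P i) => ->; case: (ord2P j) => ->.
Qed.

Lemma SFM a b a' b' c s : c^+2 + s^+2 = 1 ->
  SF a b c s * SF a' b' c s = SF (a * a') (b * b') c s.
Proof.
move=> h; rewrite -mulmxE; apply: mx2P; rewrite mul2E !(SF00, SF01, SF10, SF11).
- have -> : a * a' * c ^+ 2 + b * b' * s ^+ 2 = (a * a' * c ^+ 2 + b * b' * s ^+ 2) * (c^+2 + s^+2) by rewrite h mulr1.
  ring.
- have -> : (a * a' - b * b') * (c * s) = (a * a' - b * b') * (c * s) * (c^+2 + s^+2) by rewrite h mulr1.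
  ring.
- have -> : (a * a' - b * b') * (c * s) = (a * a' - b * b') * (c * s) * (c^+2 + s^+2) by rewrite h mulr1.
  ring.
- have -> : a * a' * s ^+ 2 + b * b' * c ^+ 2 = (a * a' * s ^+ 2 + b * b' * c ^+ 2) * (c^+2 + s^+2) by rewrite h mulr1.
  ring.
Qed.

Lemma SF1 c s : c^+2 + s^+2 = 1 -> SF 1 1 c s = 1.
Proof.
move=> h; apply: mx2P; rewrite !(SF00, SF01, SF10, SF11) !mxE /=.
- by rewrite !mul1r h.
- by rewrite subrr mul0r.
- by rewrite subrr mul0r.
- by rewrite !mul1r addrC h.
Qed.

Lemma SFX a b c s k : c^+2 + s^+2 = 1 -> SF a b c s ^+ k = SF (a ^+ k) (b ^+ k) c s.
Proof.
move=> h; elim: k => [|k IH]; first by rewrite !expr0 SF1.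
by rewrite exprS IH SFM // -!exprS.
Qed.

Lemma SFZ k a b c s : k *: SF a b c s = SF (k * a) (k * b) c s.
Proof. by rewrite /SF scalerDr !scalerA. Qed.

Lemma SF_tr a b c s : (SF a b c s)^T = SF a b c s.
Proof. by apply: mx2P; rewrite [LHS]mxE ?SF01 ?SF10. Qed.


Lemma expm_SF a b c s : c^+2 + s^+2 = 1 -> expm (SF a b c s) = SF (expR a) (expR b) c s.
Proof.
move=> h; apply/matrixP => i j; rewrite mxE SFE.
set p := ci c s i * ci c s j; set q := ci (- s) c i * ci (- s) c j.
have -> : (fun N => (\sum_(k < N) (k`!%:R)^-1 *: SF a b c s ^+ k) i j) =
   (fun N => series (exp_coeff a) N * p + series (exp_coeff b) N * q).
  apply/funext => N; rewrite summxE /series /exp_coeff /= !big_mkord !mulr_suml -big_split /=.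
  apply: eq_bigr => k _; rewrite SFX // mxE SFE -/p -/q; ring.
apply: cvg_lim => //.
have Ha := is_cvg_series_exp_coeff a; have Hb := is_cvg_series_exp_coeff b.
exact: (cvgD (cvgMr_tmp (b:=p) Ha) (cvgMr_tmp (b:=q) Hb)).
Qed.


Lemma eq_by {X Y : R} (Z : R) {w v : R} : w = v -> X - Y = Z * (w - v) -> X = Y.
Proof. by move=> ->; rewrite subrr mulr0 => /eqP; rewrite subr_eq0 => /eqP. Qed.

Lemma spectral (M : 'M[R]_2) : M 0 1 = M 1 0 ->
  exists a b c s, [/\ c^+2 + s^+2 = 1, b <= a & M = SF a b c s].
Proof.
move=> hsym.
set p := M 0 0; set r := M 0 1; set t := M 1 1.
have [r0|r0] := eqVneq r 0.
  have [tp|pt] := lerP t p.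
    exists p, t, 1, 0; split => //; first by rewrite expr1n expr0n addr0.
    apply: mx2P; rewrite !(SF00, SF01, SF10, SF11) -?hsym -/p -/r -/t ?r0; ring.
  exists t, p, 0, 1; split => //; first by rewrite expr1n expr0n add0r.
    exact: ltW.
  apply: mx2P; rewrite !(SF00, SF01, SF10, SF11) -?hsym -/p -/r -/t ?r0; ring.
set D := Num.sqrt ((p - t)^+2 + 4 * r^+2).
have D0 : 0 <= D by exact: sqrtr_ge0.
have D2 : D^+2 = (p - t)^+2 + 4 * r^+2.
  by rewrite sqr_sqrtr // addr_ge0 // ?sqr_ge0 // mulr_ge0 // sqr_ge0.
set u := (t - p + D) / 2.
have hu : u^+2 = (t - p) * u + r^+2.
  by apply: (eq_by (4^-1) D2); rewrite /u; field.
set N2 := r^+2 + u^+2.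
have r2 : 0 < r^+2 by rewrite exprn_even_gt0.
have N2p : 0 < N2 by rewrite /N2; have := sqr_ge0 u; lra.
have N2n : N2 != 0 by rewrite gt_eqF.
set N := Num.sqrt N2.
have NN : N^+2 = N2 by rewrite sqr_sqrtr // ltW.
have k00 : (p + u) * r^+2 + (t - u) * u^+2 = p * N2.
  apply: (eq_by (- u) hu); rewrite /N2; ring.
have k01 : ((p + u) - (t - u)) * (r * u) = r * N2.
  apply: (eq_by (r) hu); rewrite /N2; ring.
have k11 : (p + u) * u^+2 + (t - u) * r^+2 = t * N2.
  apply: (eq_by (u) hu); rewrite /N2; ring.
have u2 : u * 2 = t - p + D by rewrite /u divfK // pnatr_eq0.
clearbody u.
exists (p + u), (t - u), (r / N), (u / N); split.
- by rewrite !expr_div_n NN -mulrDl divff.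
- lra.
have cs : r / N * (u / N) = r * u / N2 by rewrite mulf_div -expr2 NN.
apply: mx2P; rewrite !(SF00, SF01, SF10, SF11) ?cs -?hsym -/p -/r -/t ?expr_div_n ?NN.
- by rewrite -[LHS](mulfK N2n) -k00; field.
- by rewrite -[LHS](mulfK N2n) -k01; field.
- by rewrite -[LHS](mulfK N2n) -k01; field.
- by rewrite -[LHS](mulfK N2n) -k11; field.
Qed.


Lemma lmax_SF a b c s : c^+2 + s^+2 = 1 -> b <= a -> lmax (SF a b c s) = a.
Proof.
move=> h ba.
have ea : eigenvalue (SF a b c s) a.
  apply/eigenvalueP; exists (\row_j ci c s j).
    apply/rowP => j; case: (ord2P j) => ->; rewrite mul2E !(SF00, SF01, SF10, SF11) !mxE /ci /=.
      by apply: (eq_by (a * c) h); ring.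
    by apply: (eq_by (a * s) h); ring.
  apply/eqP => /rowP H; have := H 0; have := H 1; rewrite !mxE /ci /= => h1 h0.
  by move: h; rewrite h1 h0 expr0n addr0 => /eqP; rewrite eq_sym oner_eq0.
have ub : forall x, eigenvalue (SF a b c s) x -> x <= a.
  move=> x /eigenvalueP [v hv vn0].
  have e0 : v 0 0 * SF a b c s 0 0 + v 0 1 * SF a b c s 1 0 = x * v 0 0.
    by have := congr1 (fun M : 'M[R]_(1, 2) => M 0 0) hv; rewrite mul2E [in RHS]mxE.
  have e1 : v 0 0 * SF a b c s 0 1 + v 0 1 * SF a b c s 1 1 = x * v 0 1.
    by have := congr1 (fun M : 'M[R]_(1, 2) => M 0 1) hv; rewrite mul2E [in RHS]mxE.
  rewrite !(SF00, SF01, SF10, SF11) in e0 e1.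
  set v0 := v 0 0 in e0 e1 *; set v1 := v 0 1 in e0 e1 *.
  have key : (a - x) * (v0^+2 + v1^+2) = (a - b) * (- s * v0 + c * v1)^+2.
    have -> : (a - x) * (v0^+2 + v1^+2) = a * (v0^+2 + v1^+2) - (v0 * (x * v0) + v1 * (x * v1)) by ring.
    rewrite -e0 -e1.
    by apply: (eq_by (- a * (v0^+2 + v1^+2)) h); ring.
  have vp : 0 < v0^+2 + v1^+2.
    have [z0|z0] := eqVneq v0 0; last first.
      have := sqr_ge0 v1; have : 0 < v0 ^+ 2 by rewrite exprn_even_gt0.
      move=> ? ?; lra.
    have [z1|z1] := eqVneq v1 0; last first.
      have := sqr_ge0 v0; have : 0 < v1 ^+ 2 by rewrite exprn_even_gt0.
      move=> ? ?; lra.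
    exfalso; move/eqP: vn0; apply; apply/rowP => j; rewrite mxE.
    by case: (ord2P j) => ->; [exact: z0 | exact: z1].
  rewrite -subr_ge0 -(pmulr_lge0 _ vp) key.
  by apply: mulr_ge0; rewrite ?subr_ge0 ?sqr_ge0.
rewrite /lmax; apply/le_anti/andP; split.
  by apply: ge_sup; [exists a | move=> x /ub].
by apply: ub_le_sup => //; exists a => x /ub.
Qed.


Lemma spec2_SF l m p : spec2 l m p = SF l m (cos p) (sin p).
Proof.
rewrite /spec2 /SF; congr (_ *: _ + _ *: _); apply/matrixP => i j;
  by rewrite !mxE big_ord1 !mxE.
Qed.

Definition qf (M : 'M[R]_2) (w0 w1 : R) :=
  w0^+2 * M 0 0 + w0 * w1 * (M 0 1 + M 1 0) + w1^+2 * M 1 1.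

Lemma qf_SF a b c s w0 w1 :
  qf (SF a b c s) w0 w1 = a * (c * w0 + s * w1)^+2 + b * (- s * w0 + c * w1)^+2.
Proof. rewrite /qf !(SF00, SF01, SF10, SF11); ring. Qed.

Lemma qf_sum (I : finType) (F : I -> 'M[R]_2) w0 w1 :
  qf (\sum_i F i) w0 w1 = \sum_i qf (F i) w0 w1.
Proof.
by rewrite /qf !summxE !big_split /= -!mulr_sumr big_split.
Qed.

Lemma absr_le1 (c s : R) : c^+2 + s^+2 = 1 -> `|c * s| <= 1.
Proof.
move=> h; rewrite ler_norml; apply/andP; split.
  have := sqr_ge0 (c + s); nra.
have := sqr_ge0 (c - s); nra.
Qed.

Lemma sq_le1 (c s : R) : c^+2 + s^+2 = 1 -> c^+2 <= 1.
Proof. move=> h; have := sqr_ge0 s; lra. Qed.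

End Alg.

Section Main.
Variables (R : realType) (n : nat) (lam mu phi : 'I_n.+1 -> R) (X : 'I_n.+1 -> 'M[R]_2).
Hypothesis hX : forall i, X i = spec2 (lam i) (mu i) (phi i).
Hypothesis huniq_lam : forall i, i != ord0 -> lam i < lam ord0.
Hypothesis huniq_mu : forall i, mu i < lam ord0.
Hypothesis hu1 : uvec (phi ord0) = e1 R.

Local Notation C i := (cos (phi i)).
Local Notation S i := (sin (phi i)).
Local Notation l1 := (lam ord0).

Lemma hCS i : C i ^+ 2 + S i ^+ 2 = 1.
Proof. exact: cos2Dsin2. Qed.

Lemma C0 : C ord0 = 1.
Proof. by have := congr1 (fun M : 'cV[R]_2 => M 0 0) hu1; rewrite !mxE. Qed.

Lemma S0 : S ord0 = 0.
Proof. by have := congr1 (fun M : 'cV[R]_2 => M 1 0) hu1; rewrite !mxE. Qed.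

Definition g i := if i == ord0 then mu i else Num.max (lam i) (mu i).
Definition lp := \big[Num.max/mu ord0]_i g i.

Lemma lp_lt : lp < l1.
Proof.
rewrite /lp; elim/big_ind: _ => //.
  by move=> x y hx hy; rewrite gt_max hx hy.
move=> i _; rewrite /g; case: eqP => [_|/eqP ne]; first exact: huniq_mu.
by rewrite gt_max huniq_mu huniq_lam.
Qed.

Lemma g_le i : g i <= lp.
Proof. by rewrite /lp (bigD1 i) //= le_max lexx. Qed.

Lemma mu_le i : mu i <= lp.
Proof.
apply: le_trans (g_le i); rewrite /g; case: eqP => // _.
by rewrite le_max lexx orbT.
Qed.

Lemma lam_le i : i != ord0 -> lam i <= lp.
Proof.
move=> ne; apply: le_trans (g_le i); rewrite /g (negbTE ne).
by rewrite le_max lexx.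
Qed.

Definition ex (m : nat) (x : R) := expR (m%:R * x).

Lemma ex_gt0 m x : 0 < ex m x. Proof. exact: expR_gt0. Qed.

Lemma ex_le m {x y : R} : x <= y -> ex m x <= ex m y.
Proof. by move=> xy; rewrite /ex ler_expR ler_wpM2l. Qed.

Lemma Em_SF m : Em X m = \sum_i SF (ex m (lam i)) (ex m (mu i)) (C i) (S i).
Proof.
rewrite /Em; apply: eq_bigr => i _.
by rewrite hX spec2_SF SFZ expm_SF // hCS.
Qed.

Lemma eqle (x y : R) : x = y -> x <= y. Proof. by move=> ->. Qed.

Lemma qf_E m w0 w1 :
  ex m l1 * w0^+2 + ex m (mu ord0) * w1^+2 <= qf (Em X m) w0 w1.
Proof.
rewrite Em_SF qf_sum (bigD1 ord0) //= qf_SF C0 S0.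
rewrite -[X in X <= _]addr0; apply: lerD.
  by apply: eqle; ring.
apply: sumr_ge0 => i _; rewrite qf_SF.
by apply: addr_ge0; apply: mulr_ge0; rewrite ?sqr_ge0 // ltW // ex_gt0.
Qed.

Definition K : R := 2 * (n%:R + 1).

Lemma sum_split {F : 'I_n.+1 -> R} {B0 B : R} :
  F ord0 <= B0 -> (forall i, F (lift ord0 i) <= B) -> \sum_i F i <= B0 + B * n%:R.
Proof.
move=> h0 h; rewrite big_ord_recl; apply: lerD => //.
apply: le_trans (_ : \sum_(i < n) B <= _).
  by apply: ler_sum => i _; exact: h.
by rewrite sumr_const card_ord mulr_natr.
Qed.

Lemma lift_ne (i : 'I_n) : lift ord0 i != ord0.
Proof. by rewrite eq_sym neq_lift. Qed.

Lemma trE m : Em X m 0 0 + Em X m 1 1 <= ex m l1 + K * ex m lp.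
Proof.
have -> : Em X m 0 0 + Em X m 1 1 = \sum_i (ex m (lam i) + ex m (mu i)).
  rewrite Em_SF !summxE -big_split /=; apply: eq_bigr => i _.
  rewrite SF00 SF11; apply: (eq_by (ex m (lam i) + ex m (mu i)) (hCS i)); ring.
have hG : 0 <= ex m lp by exact/ltW/ex_gt0.
apply: le_trans (sum_split (B0 := ex m l1 + ex m lp) (B := 2 * ex m lp) _ _) _.
- by apply: lerD => //; apply/ex_le/mu_le.
- move=> i /=; have := ex_le m (lam_le _ (lift_ne i)); have := ex_le m (mu_le (lift ord0 i)).
  lra.
- rewrite /K; nra.
Qed.


Lemma E11_le m : Em X m 1 1 <= K * ex m lp.
Proof.
rewrite Em_SF summxE.
have hG : 0 <= ex m lp by exact/ltW/ex_gt0.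
apply: le_trans (sum_split (B0 := ex m lp) (B := 2 * ex m lp) _ _) _.
- by rewrite SF11 C0 S0 expr0n expr1n mulr0 add0r mulr1; apply/ex_le/mu_le.
- move=> i /=; rewrite SF11.
  have := ex_le m (lam_le _ (lift_ne i)); have := ex_le m (mu_le (lift ord0 i)).
  have := sq_le1 _ _ (hCS (lift ord0 i)).
  have := sqr_ge0 (C (lift ord0 i)); have := sqr_ge0 (S (lift ord0 i)).
  have := sq_le1 _ _ (etrans (addrC _ _) (hCS (lift ord0 i))).
  have := ex_gt0 m (lam (lift ord0 i)); have := ex_gt0 m (mu (lift ord0 i)).
  nra.
- rewrite /K; nra.
Qed.

Lemma E01_le m : `|Em X m 1 0| <= K * ex m lp.
Proof.
rewrite Em_SF summxE; apply: le_trans (ler_norm_sum _ _ _) _.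
have hG : 0 <= ex m lp by exact/ltW/ex_gt0.
apply: le_trans (sum_split (B0 := 0) (B := 2 * ex m lp) _ _) _.
- by rewrite SF10 S0 !mulr0 normr0.
- move=> i /=; rewrite SF10 normrM.
  have := ex_le m (lam_le _ (lift_ne i)); have := ex_le m (mu_le (lift ord0 i)).
  have := absr_le1 _ _ (hCS (lift ord0 i)).
  have := ex_gt0 m (lam (lift ord0 i)); have := ex_gt0 m (mu (lift ord0 i)).
  have := normr_ge0 (C (lift ord0 i) * S (lift ord0 i)).
  have : `|ex m (lam (lift ord0 i)) - ex m (mu (lift ord0 i))| <= ex m (lam (lift ord0 i)) + ex m (mu (lift ord0 i)).
    by apply: le_trans (ler_normB _ _) _; rewrite !gtr0_norm ?ex_gt0.
  nra.
- rewrite /K; nra.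
Qed.


Lemma qf_pos m w0 w1 : w0^+2 + w1^+2 = 1 -> ex m (mu ord0) <= qf (Em X m) w0 w1.
Proof.
move=> hw; apply: le_trans (qf_E m w0 w1).
have := ex_le m (ltW (huniq_mu ord0)); have := ex_gt0 m (mu ord0).
have := sqr_ge0 w0; have := sqr_ge0 w1; nra.
Qed.

Lemma logm_spec m : exists a b c s, [/\ c^+2 + s^+2 = 1, b <= a,
  logm (Em X m) = SF a b c s & Em X m = SF (expR a) (expR b) c s].
Proof.
have sym : Em X m 0 1 = Em X m 1 0.
  by rewrite Em_SF !summxE; apply: eq_bigr => i _; rewrite SF01 SF10.
have [A [B [c [s [h BA hE]]]]] := spectral _ sym.
have Ap : 0 < A.
  apply: lt_le_trans (ex_gt0 m (mu ord0)) _.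
  apply: le_trans (qf_pos m _ _ h) _; rewrite hE qf_SF.
  by apply: eqle; apply: (eq_by (A * (c^+2 + s^+2 + 1)) h); ring.
have Bp : 0 < B.
  apply: lt_le_trans (ex_gt0 m (mu ord0)) _.
  have h' : (- s)^+2 + c^+2 = 1 by rewrite sqrrN addrC.
  apply: le_trans (qf_pos m _ _ h') _; rewrite hE qf_SF.
  by apply: eqle; apply: (eq_by (B * (c^+2 + s^+2 + 1)) h); ring.
have hex : exists L : 'M[R]_2, L^T = L /\ expm L = Em X m.
  exists (SF (ln A) (ln B) c s); split; first exact: SF_tr.
  by rewrite expm_SF // !lnK ?posrE.
have [Lsym LE] := xgetPex 0 hex.
rewrite -/(logm (Em X m)) in Lsym LE.
have symL : logm (Em X m) 0 1 = logm (Em X m) 1 0.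
  by have := congr1 (fun M : 'M[R]_2 => M 1 0) Lsym; rewrite mxE.
have [a [b [c' [s' [h' ba hL]]]]] := spectral _ symL.
exists a, b, c', s'; split => //.
by rewrite -LE hL expm_SF.
Qed.


Lemma div_bound {x D T k : R} : 0 < T -> 0 <= x -> T / 2 <= D -> D * x <= T * k -> x <= 2 * k.
Proof. move=> T0 x0 hD hx; nra. Qed.

Definition rho := expR (lp - l1).

Lemma exG m : ex m lp = ex m l1 * rho ^+ m.
Proof.
by rewrite /ex /rho -expRM_natl -expRD -mulrDr addrCA subrr addr0.
Qed.

Lemma K_ge0 : 0 <= K.
Proof. by rewrite /K mulr_ge0 // addr_ge0. Qed.

Lemma bounds m a b c s : c^+2 + s^+2 = 1 -> b <= a ->
  Em X m = SF (expR a) (expR b) c s ->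
  [/\ m%:R * l1 <= a, a <= m%:R * l1 + ln (1 + K), m%:R * mu ord0 <= b &
    (K * rho ^+ m <= 2^-1 -> s^+2 <= 2 * (K * rho ^+ m) /\ `|c * s| <= 2 * (K * rho ^+ m))].
Proof.
move=> h ba hE.
have Ap : 0 < expR a by exact: expR_gt0.
have Bp : 0 < expR b by exact: expR_gt0.
have BA : expR b <= expR a by rewrite ler_expR.
have e00 : Em X m 0 0 = expR a * c^+2 + expR b * s^+2 by rewrite hE SF00.
have e11 : Em X m 1 1 = expR a * s^+2 + expR b * c^+2 by rewrite hE SF11.
have e10 : Em X m 1 0 = (expR a - expR b) * (c * s) by rewrite hE SF10.
have hT : ex m l1 <= Em X m 0 0.
  have := qf_E m 1 0; rewrite /qf.
  have -> : (1 : R) ^+ 2 * Em X m 0 0 + 1 * 0 * (Em X m 0 1 + Em X m 1 0) + 0 ^+ 2 * Em X m 1 1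
     = Em X m 0 0 by ring.
  by rewrite expr1n mulr1 expr0n mulr0 addr0.
have hA00 : expR a - Em X m 0 0 = (expR a - expR b) * s^+2.
  by rewrite e00; apply: (eq_by (- expR a) h); ring.
have h11B : Em X m 1 1 - expR b = (expR a - expR b) * s^+2.
  by rewrite e11; apply: (eq_by (expR b) h); ring.
have sAB : Em X m 0 0 + Em X m 1 1 = expR a + expR b.
  by rewrite e00 e11; apply: (eq_by (expR a + expR b) h); ring.
have hs0 : 0 <= (expR a - expR b) * s^+2 by rewrite mulr_ge0 ?subr_ge0 ?sqr_ge0.
have hGT : ex m lp <= ex m l1 by apply/ex_le/ltW/lp_lt.
have hK := K_ge0.
have htr := trE m.
have hE11 := E11_le m.
have hE10 := E01_le m.
split.
- rewrite -ler_expR -/(ex m l1); lra.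
- rewrite -ler_expR expRD lnK ?posrE; last by lra.
  rewrite -/(ex m l1); nra.
- rewrite -ler_expR -/(ex m (mu ord0)).
  have h' : (- s)^+2 + c^+2 = 1 by rewrite sqrrN addrC.
  apply: le_trans (qf_pos m _ _ h') _; rewrite hE qf_SF.
  by apply: eqle; apply: (eq_by (expR b * (c^+2 + s^+2 + 1)) h); ring.
move=> hr.
have T0 := ex_gt0 m l1.
rewrite exG in hE11 hE10.
have hD : ex m l1 / 2 <= expR a - expR b.
  have : ex m l1 * (K * rho ^+ m) <= ex m l1 / 2.
    by rewrite ler_pM2l // mulrC mul1r.
  lra.
split.
  apply: (div_bound T0 (sqr_ge0 s) hD); lra.
apply: (div_bound T0 (normr_ge0 _) hD).
have hAB : 0 <= expR a - expR b by rewrite subr_ge0.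
rewrite -[X in X * _](ger0_norm hAB) -normrM -e10.
by rewrite mulrCA.
Qed.


Lemma sc1 {y M a l : R} : 0 < y -> y * M = 1 -> M * l <= a -> l <= y * a.
Proof.
by move=> y0 yM h; have := ler_wpM2l (ltW y0) h; rewrite mulrA yM mul1r.
Qed.

Lemma sc2 {y M a l C : R} : 0 < y -> y * M = 1 -> a <= M * l + C -> y * a <= l + C * y.
Proof.
move=> y0 yM h; have := ler_wpM2l (ltW y0) h.
by rewrite mulrDr mulrA yM mul1r [y * C]mulrC.
Qed.

Lemma hinv : ((fun m : nat => (m%:R : R)^-1) @ \oo --> 0)%classic.
Proof. by rewrite -(cvg_shiftS (fun m : nat => (m%:R : R)^-1)); exact: cvg_harmonic. Qed.

Local Open Scope classical_set_scope.

Lemma part1 : (fun m : nat => lmax ((m%:R)^-1 *: logm (Em X m))) @ \oo --> l1.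
Proof.
set Cc := ln (1 + K).
apply: (@squeeze_cvgr _ _ _ _ (fun _ => l1) (fun m => l1 + Cc * (m%:R)^-1)).
- near=> m.
  have m1 : (1 <= m)%N by near: m; exact: nbhs_infty_ge.
  have mp : (0 : R) < m%:R by rewrite ltr0n.
  have yp : (0 : R) < (m%:R)^-1 by rewrite invr_gt0.
  have yM : (m%:R : R)^-1 * m%:R = 1 by rewrite mulVf // gt_eqF.
  have [a [b [c [s [h ba hL hE]]]]] := logm_spec m.
  have [i1 i2 _ _] := bounds _ _ _ _ _ h ba hE.
  rewrite hL SFZ lmax_SF //; last by rewrite ler_wpM2l // ltW.
  apply/andP; split; [exact: sc1 yp yM i1 | exact: sc2 yp yM i2].
- apply: cvg_cst.
- have H := cvgD (cvg_cst l1) (cvgMl_tmp (a := Cc) hinv).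
  rewrite mulr0 addr0 in H; exact: H.
Unshelve. all: by end_near.
Qed.


Lemma rho_lt1 : 0 < rho < 1.
Proof.
rewrite /rho expR_gt0 /= -[X in _ < X]expR0 ltr_expR subr_lt0; exact: lp_lt.
Qed.

Lemma hrho : (fun m : nat => rho ^+ m) @ \oo --> 0.
Proof.
apply: cvg_expr; have /andP[r0 r1] := rho_lt1; by rewrite ger0_norm // ltW.
Qed.

Lemma K_gt0 : 0 < K.
Proof. by rewrite /K mulr_gt0 // ltr_wpDl. Qed.

Lemma near_small : \forall m \near \oo, K * rho ^+ m <= 2^-1.
Proof.
have Kp := K_gt0.
have z0 : (0 : R) < (2 * K)^-1 by rewrite invr_gt0 mulr_gt0.
near=> m.
have : rho ^+ m <= (2 * K)^-1 by near: m; exact: (cvgr_le _ hrho).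
move=> hm; have := ler_wpM2l (ltW Kp) hm.
by rewrite invfM mulrCA mulfV ?gt_eqF // mulr1.
Unshelve. all: by end_near.
Qed.

Definition Bd := l1 - mu ord0 + ln (1 + K).

Lemma entries_bound : \forall m \near \oo,
  [/\ l1 - Bd * (2 * K) * rho ^+ m <= ((m%:R)^-1 *: logm (Em X m)) 0 0,
      ((m%:R)^-1 *: logm (Em X m)) 0 0 <= l1 + ln (1 + K) * (m%:R)^-1 &
      `|((m%:R)^-1 *: logm (Em X m)) 1 0| <= Bd * (2 * K) * rho ^+ m].
Proof.
near=> m.
have m1 : (1 <= m)%N by near: m; exact: nbhs_infty_ge.
have hsm : K * rho ^+ m <= 2^-1 by near: m; exact: near_small.
have mp : (0 : R) < m%:R by rewrite ltr0n.
have yp : (0 : R) < (m%:R)^-1 by rewrite invr_gt0.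
have y1 : (m%:R : R)^-1 <= 1 by rewrite invr_le1 // ?ler1n // unitfE gt_eqF.
have yM : (m%:R : R)^-1 * m%:R = 1 by rewrite mulVf // gt_eqF.
have [a [b [c [s [h ba hL hE]]]]] := logm_spec m.
have [i1 i2 i3 /(_ hsm) [hs hcs]] := bounds _ _ _ _ _ h ba hE.
have Cp : 0 <= ln (1 + K) by rewrite ln_ge0 // ler_wpDr // K_ge0.
set y := (m%:R : R)^-1 in yp y1 yM *.
have al := sc1 yp yM i1; have au := sc2 yp yM i2; have bl := sc1 yp yM i3.
have ab : y * b <= y * a by rewrite ler_wpM2l // ltW.
have hab : y * a - y * b <= Bd.
  rewrite /Bd; have : ln (1 + K) * y <= ln (1 + K) by rewrite ler_piMr.
  lra.
rewrite hL SFZ SF00 SF10.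
have rm : 0 <= rho ^+ m by rewrite exprn_ge0 //; case/andP: rho_lt1 => /ltW.
set r := rho ^+ m in hs hcs rm *.
have s2 := sqr_ge0 s.
have c2 : c^+2 = 1 - s^+2 by rewrite -h addrK.
split.
- rewrite c2.
  have key : y * a * (1 - s ^+ 2) + y * b * s ^+ 2 = y * a - (y * a - y * b) * s^+2 by ring.
  rewrite key.
  have : (y * a - y * b) * s^+2 <= Bd * (2 * (K * r)).
    by apply: ler_pM => //; rewrite subr_ge0.
  rewrite !mulrA; lra.
- rewrite c2.
  have key : y * a * (1 - s ^+ 2) + y * b * s ^+ 2 = y * a - (y * a - y * b) * s^+2 by ring.
  rewrite key.
  have : 0 <= (y * a - y * b) * s^+2 by rewrite mulr_ge0 // subr_ge0.
  lra.
- rewrite normrM ger0_norm ?subr_ge0 // -mulrA -[2 * K * r]mulrA.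
  by apply: ler_pM => //; rewrite subr_ge0.
Unshelve. all: by end_near.
Qed.


Lemma part2 (S : 'M[R]_2) :
  (forall i j, (fun m : nat => ((m%:R)^-1 *: logm (Em X m)) i j) @ \oo --> S i j) ->
  S *m e1 R = l1 *: e1 R.
Proof.
move=> hS.
have H00 : (fun m : nat => ((m%:R)^-1 *: logm (Em X m)) 0 0) @ \oo --> l1.
  apply: (@squeeze_cvgr _ _ _ _ (fun m => l1 - Bd * (2 * K) * rho ^+ m)
                           (fun m => l1 + ln (1 + K) * (m%:R)^-1)).
  - by apply: filterS entries_bound => m [h1 h2 _]; apply/andP.
  - have H := cvgB (cvg_cst l1) (cvgMl_tmp (a := Bd * (2 * K)) hrho).
    rewrite mulr0 subr0 in H; exact: H.
  - have H := cvgD (cvg_cst l1) (cvgMl_tmp (a := ln (1 + K)) hinv).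
    rewrite mulr0 addr0 in H; exact: H.
have H10 : (fun m : nat => ((m%:R)^-1 *: logm (Em X m)) 1 0) @ \oo --> 0.
  apply: (@squeeze_cvgr _ _ _ _ (fun m => - (Bd * (2 * K) * rho ^+ m))
                           (fun m => Bd * (2 * K) * rho ^+ m)).
  - by apply: filterS entries_bound => m [_ _ h3]; rewrite -ler_norml.
  - have H := cvgN (cvgMl_tmp (a := Bd * (2 * K)) hrho).
    rewrite mulr0 oppr0 in H; exact: H.
  - have H := cvgMl_tmp (a := Bd * (2 * K)) hrho.
    rewrite mulr0 in H; exact: H.
have e00 : S 0 0 = l1 by apply: (cvg_unique _ (hS 0 0) H00).
have e10 : S 1 0 = 0 by apply: (cvg_unique _ (hS 1 0) H10).
apply/matrixP => i j; rewrite (ord1 j) mul2E !mxE /=.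
by case: (ord2P i) => ->; rewrite ?e00 ?e10 /= ?mulr1 ?mulr0 ?addr0.
Qed.

End Main.

(* The multiset X_1,...,X_n is indexed by 'I_n.+1; X_1 is the index ord0. *)
Theorem lemma2 (R : realType) (n : nat) (lam mu phi : 'I_n.+1 -> R)
    (X : 'I_n.+1 -> 'M[R]_2)
    (hX : forall i, X i = spec2 (lam i) (mu i) (phi i))
    (hlm : forall i, mu i <= lam i)
    (hphi : forall i, - (pi / 2) <= phi i <= pi / 2)
    (huniq_lam : forall i, i != ord0 -> lam i < lam ord0)
    (huniq_mu : forall i, mu i < lam ord0)
    (hu1 : uvec (phi ord0) = e1 R)
    (hv1 : vvec (phi ord0) = e2 R) :
  ((fun m : nat => lmax ((m%:R)^-1 *: logm (Em X m))) @ \oo --> lam ord0)%classic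
  /\ (forall S : 'M[R]_2,
        (forall i j, ((fun m : nat => ((m%:R)^-1 *: logm (Em X m)) i j) @ \oo
                        --> S i j)%classic) ->
        S *m e1 R = lam ord0 *: e1 R).
Proof.
split; first by apply: part1.
by move=> S hS; apply: part2.
Qed.
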